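(* Let $n\ge 1$ and let $X=\mathrm{P}_n$ be the path graph on $n$ vertices. Then $|\mathrm{Fix}(\mathbf{F}^\uparrow)|=2F_{3n-1}$, where $F_m$ is the $m$-th Fibonacci number ($F_0=0$, $F_1=1$, $F_m=F_{m-1}+F_{m-2}$).
   Context: For a finite simple graph $X$ with vertices $1,\dots,n$, $d(v)$ is the degree of $v$ and $n[v]$ the closed neighborhood of $v$. An extended vertex state is $s_v=(x_v,k_v)\in\{0,1\}\times\{1,\dots,d(v)+1\}$; $\mathcal{S}$ is the product of these sets. Let $\sigma(x[v])=|\{u\in n[v]:x_u=1\}|$. The increasing vertex function maps $(x_v,k_v)$ to $(x_v',k_v')$ with $x_v'=1$ iff $\sigma(x[v])\ge k_v$ (else $0$), and $k_v'=k_v+1$ if $x_v=0$ and $\sigma(x[v])\ge k_v$, else $k_v'=k_v$. $\mathbf{F}^\uparrow:\mathcal{S}\to\mathcal{S}$ applies this vertex function at all vertices simultaneously, and $\mathrm{Fix}(\mathbf{F}^\uparrow)$ is its set of fixed points (equivalently: states with, for every $v$, either $x_v=0$ and $\sigma(x[v])<k_v$, or $x_v=1$ and $\sigma(x[v])\ge k_v$). *)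

(* Defs.v *)
From mathcomp Require Import all_boot.
Set Implicit Arguments. Unset Strict Implicit. Unset Printing Implicit Defensive.

Definition simple_graph n (e : rel 'I_n) : Prop :=
  (forall u v, e u v = e v u) /\ (forall v, ~~ e v v).

Definition deg n (e : rel 'I_n) (v : 'I_n) : nat := #|[set u | e v u]|.
Definition cnbhd n (e : rel 'I_n) (v : 'I_n) : {set 'I_n} :=
  [set u | (u == v) || e v u].

(* An (encoded) global state: each vertex carries (x_v, k_v), with k_v stored
   as a natural number in 'I_n.+2 (degrees are < n, so k_v <= d(v)+1 <= n). *)
Definition state n := {ffun 'I_n -> bool * 'I_n.+2}.
Definition xs n (s : state n) (v : 'I_n) : bool := (s v).1.
Definition ks n (s : state n) (v : 'I_n) : nat := (s v).2.

Definition in_S n (e : rel 'I_n) (s : state n) : bool :=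
  [forall v, (1 <= ks s v) && (ks s v <= deg e v + 1)].

Definition sigma n (e : rel 'I_n) (s : state n) (v : 'I_n) : nat :=
  #|[set u in cnbhd e v | xs s u]|.

Definition vfun_up (x : bool) (k sig : nat) : bool * nat :=
  (k <= sig, if ~~ x && (k <= sig) then k.+1 else k).

Definition is_fixed_up n (e : rel 'I_n) (s : state n) : bool :=
  [forall v, vfun_up (xs s v) (ks s v) (sigma e s v) == (xs s v, ks s v)].

Definition Fix_up n (e : rel 'I_n) : {set state n} :=
  [set s | in_S e s && is_fixed_up e s].

Definition path_rel n : rel 'I_n := fun i j => (i.+1 == j :> nat) || (j.+1 == i :> nat).

Fixpoint fib (m : nat) : nat :=
  match m with 0 => 0 | 1 => 1 | (m'.+1 as p).+1 => fib p + fib m' end.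

(* Main.v *)
Require Import Defs.
From mathcomp Require Import all_boot zify.
Set Implicit Arguments. Unset Strict Implicit. Unset Printing Implicit Defensive.

Definition nb (p : option bool) (l : seq bool) (i : nat) : nat :=
  1 + ((if i is j.+1 then Some (nth false l j) else p) == Some (nth false l i))
    + ((i.+1 < size l) && (nth false l i.+1 == nth false l i)).
Definition W p l := \prod_(i < size l) nb p l i.

Lemma W_cons p a t : W p (a :: t) = (1 + (p == Some a) + (ohead t == Some a)) * W (Some a) t.
Proof.
rewrite /W /= big_ord_recl; congr (_ * _).
  by rewrite /nb /=; case: t.
by apply: eq_bigr => i _; rewrite /nb /bump /=; case: (nat_of_ord i).
Qed.

Fixpoint allb n := if n is m.+1 then [seq false :: t | t <- allb m] ++ [seq true :: t | t <- allb m] else [:: [::]].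

Lemma sum_allb (F : seq bool -> nat) m : \sum_(l <- allb m.+1) F l = \sum_(l <- allb m) F (false :: l) + \sum_(l <- allb m) F (true :: l).
Proof. by rewrite /= big_cat !big_map. Qed.

Fixpoint E m (e : bool) := if m is k.+1 then (2 + e) * E k true + (1 + e) * E k false else 1 + e.

Lemma D_E m p a : \sum_(t <- allb m) W p (a :: t) = E m (p == Some a).
Proof.
elim: m p a => [|m IH] p a.
  by rewrite /= big_seq1 W_cons /W big_ord0 /= muln1 addn0.
rewrite sum_allb.
under eq_bigr do rewrite W_cons.
under [X in _ + X]eq_bigr do rewrite W_cons.
rewrite /= -!big_distrr /= !IH /=.
by case: a => /=; rewrite ?addn0 ?addn1 // addnC.
Qed.

Lemma fibSS k : fib k.+2 = fib k.+1 + fib k. Proof. by []. Qed.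

Lemma E_fib m : E m true = fib (3 * m + 3) /\ E m false = fib (3 * m + 2).
Proof.
elim: m => [|m [IH1 IH2]]; first by [].
rewrite [E m.+1 true]/= [E m.+1 false]/= IH1 IH2.
have -> : 3 * m.+1 + 3 = (3 * m + 2).+4 by lia.
have -> : 3 * m.+1 + 2 = (3 * m + 2).+3 by lia.
have -> : 3 * m + 3 = (3 * m + 2).+1 by lia.
rewrite !fibSS; split; lia.
Qed.

Lemma total m : \sum_(l <- allb m.+1) W None l = 2 * fib (3 * m.+1 - 1).
Proof.
rewrite sum_allb !D_E /=; have [_ ->] := E_fib m.
have -> : 3 * m.+1 - 1 = 3 * m + 2 by lia.
lia.
Qed.
Lemma pt (u v : nat) (P : bool) : ((u == v) -> P) ->
  (if ((u == v) || ((v.+1 == u) || (u.+1 == v))) && P then 1 else 0) =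
  (u == v) + ((u == v.+1) && P) + ((u == v.-1) && ((v != 0) && P)).
Proof.
case: P => [_|hP]; last (case E0: (u == v); first by have := hP E0).
all: case E1: (u == v); case E2: (v.+1 == u); case E3: (u.+1 == v);
case E4: (u == v.+1); case E5: (u == v.-1); case E6: (v == 0) => //=; lia.
Qed.

Lemma sum_eq_pt N c (Q : nat -> bool) :
  \sum_(0 <= k < N) ((k == c) && Q k) = (c < N) && Q c.
Proof.
elim: N => [|N IH]; first by rewrite big_geq.
rewrite big_nat_recr //= IH.
case H: (N == c).
  by move/eqP: H => <-; rewrite ltnn ltnSn.
by rewrite andFb addn0 ltnS [c <= N]leq_eqVlt (eq_sym c) H.
Qed.


Definition L m (x : {ffun 'I_m.+1 -> bool}) : seq bool := mkseq (fun i => x (inord i)) m.+1.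

Lemma nthL m (x : {ffun 'I_m.+1 -> bool}) (u : 'I_m.+1) : x u = nth false (L x) u.
Proof. by rewrite nth_mkseq // inord_val. Qed.

Lemma wt_path m (x : {ffun 'I_m.+1 -> bool}) (v : 'I_m.+1) :
 #|[set u in cnbhd (@path_rel m.+1) v | x u == x v]| = nb None (L x) v.
Proof.
rewrite -sum1dep_card big_mkcond /=.
set y := nth false (L x).
under eq_bigr => u _.
  rewrite inE /path_rel !nthL -/y pt; last by move=> /eqP /val_inj ->.
  over.
rewrite /= -(big_mkord xpredT (fun u => (u == v) + ((u == v.+1) && (y u == y v)) + ((u == (v:nat).-1) && (((v:nat) != 0) && (y u == y v))))).
rewrite !big_split /=.
under eq_big_nat => i _ do rewrite -[i == nat_of_ord v]andbT.
rewrite !sum_eq_pt ltn_ord /nb size_mkseq -/y.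
clearbody y.
case: v => [[|v] hv] /=.
  by rewrite !addn0.
have -> : (Some (y v) == Some (y v.+1)) = (y v == y v.+1) by [].
by rewrite (ltnW hv) /= addnAC.
Qed.

Lemma mem_allb n l : (l \in allb n) = (size l == n).
Proof.
elim: n l => [|n IH] [|b t] //=.
  by rewrite mem_cat; apply/negP => /orP [] /mapP [].
have ci (c : bool) : injective (cons c) by move=> ? ? [].
rewrite mem_cat; case: b.
  rewrite (mem_map (ci true)) IH.
  by case: mapP => // -[? _].
rewrite (mem_map (ci false)) IH.
by case: mapP => [[? _]|]; rewrite ?orbF.
Qed.

Lemma uniq_allb n : uniq (allb n).
Proof.
elim: n => [|n IH] //=.
have ci (c : bool) : injective (cons c) by move=> ? ? [].
rewrite cat_uniq !(map_inj_uniq (ci _)) IH andbT /=.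
by apply/hasPn => l /mapP [t _ ->]; apply/mapP => -[].
Qed.

Lemma L_inj m : injective (@L m).
Proof.
move=> x y h; apply/ffunP => i.
by rewrite !nthL h.
Qed.

Lemma sum_ffun m (G : seq bool -> nat) :
  \sum_(x : {ffun 'I_m.+1 -> bool}) G (L x) = \sum_(l <- allb m.+1) G l.
Proof.
transitivity (\sum_(l <- map (@L m) (enum {ffun 'I_m.+1 -> bool})) G l).
  by rewrite big_map big_enum.
apply: perm_big; apply: uniq_perm.
- by rewrite (map_inj_uniq (@L_inj m)) enum_uniq.
- exact: uniq_allb.
move=> l; rewrite mem_allb; apply/mapP/eqP.
  by move=> [x _ ->]; rewrite size_mkseq.
move=> hl; exists [ffun i : 'I_m.+1 => nth false l i]; first by rewrite mem_enum.
apply: (@eq_from_nth _ false); first by rewrite size_mkseq.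
move=> i; rewrite hl => hi.
by rewrite nth_mkseq // ffunE inordK.
Qed.

Lemma vfun_fixE x k s : (vfun_up x k s == (x, k)) = (x == (k <= s)).
Proof.
rewrite /vfun_up xpair_eqE eq_sym.
case: x; case: (k <= s) => //=; rewrite ?eqxx ?andbT // gtn_eqF.
Qed.

Lemma cnt N a b : a <= b <= N -> #|[pred k : 'I_N | (a <= k) && (k < b)]| = b - a.
Proof.
move=> /andP [hab hbN].
rewrite -sum1_card big_mkcond /=.
rewrite -(big_mkord xpredT (fun k => if (a <= k) && (k < b) then 1 else 0)).
rewrite (@big_cat_nat _ _ _ a) //=; last by lia.
rewrite (@big_cat_nat _ _ _ b a N) //=.
rewrite (eq_big_nat _ _ (F2 := fun _ => 0)); last by move=> i hi; case: ifP => //; lia.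
rewrite [X in _ + (X + _)](eq_big_nat _ _ (F2 := fun _ => 1)); last by move=> i hi; case: ifP => //; lia.
rewrite [X in _ + (_ + X)](eq_big_nat _ _ (F2 := fun _ => 0)); last by move=> i hi; case: ifP => //; lia.
rewrite !sum_nat_const_nat; lia.
Qed.

Lemma cardpair N (c : bool) (Q : pred 'I_N) :
  #|[pred p : bool * 'I_N | (p.1 == c) && Q p.2]| = #|Q|.
Proof.
rewrite -(card_imset Q (fun k1 k2 => @congr1 _ _ snd (c, k1) (c, k2))).
apply: eq_card => -[b k]; rewrite inE /=.
apply/andP/imsetP.
  by move=> [/eqP -> hk]; exists k.
by move=> [k' hk' [-> ->]].
Qed.

Definition sg n (e : rel 'I_n) (x : {ffun 'I_n -> bool}) v := #|[set u in cnbhd e v | x u]|.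

Lemma card_cnbhd n (e : rel 'I_n) v : ~~ e v v -> #|cnbhd e v| = deg e v + 1.
Proof.
move=> hv.
have -> : cnbhd e v = v |: [set u | e v u] by apply/setP => u; rewrite !inE.
by rewrite cardsU1 inE hv addnC.
Qed.

Lemma sigmaE n (e : rel 'I_n) (s : state n) v :
  sigma e s v = sg e [ffun u => xs s u] v.
Proof. by rewrite /sigma /sg; apply: eq_card => u; rewrite !inE ffunE. Qed.

Lemma card_Fix n (e : rel 'I_n) : (forall v, ~~ e v v) ->
 #|Fix_up e| = \sum_(x : {ffun 'I_n -> bool}) \prod_(v : 'I_n) #|[set u in cnbhd e v | x u == x v]|.
Proof.
move=> irr.
rewrite -sum1_card (partition_big (fun s : state n => [ffun v => xs s v]) xpredT) //=.
apply: eq_bigr => x _.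
rewrite sum1dep_card.
pose F := fun v => [pred p : bool * 'I_n.+2 | (p.1 == x v) &&
   (((1 <= p.2) && (p.2 <= deg e v + 1)) && (x v == (p.2 <= sg e x v)))].
transitivity #|(family F : simpl_pred _)|.
  apply: eq_card => s; rewrite !inE /in_S /is_fixed_up.
  apply/idP/familyP.
    move=> /andP [/andP [/forallP HS /forallP HF] /eqP Hx] v.
    have := HS v; have := HF v; rewrite vfun_fixE sigmaE Hx.
    rewrite inE /= -Hx ffunE /xs /ks => /eqP <- ->.
    by rewrite !eqxx.
  move=> H.
  have Hx : [ffun v => xs s v] = x.
    by apply/ffunP => v; rewrite ffunE /xs; have := H v; rewrite inE => /andP [/eqP -> _].
  rewrite Hx eqxx andbT; apply/andP; split; apply/forallP => v; have := H v;
    rewrite inE => /andP [/eqP h1 /andP [h2 h3]] //.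
  by rewrite vfun_fixE sigmaE Hx /xs /ks h1.
rewrite card_family foldrE big_map big_enum /=.
apply: eq_bigr => v _.
set d := deg e v; set s := sg e x v.
have hd := card_cnbhd (irr v).
have hs : s <= d + 1.
  by rewrite -hd; apply: subset_leq_card; apply/subsetP => u; rewrite inE => /andP [].
have hdn : d + 1 <= n by rewrite -hd -[n in _ <= n]card_ord max_card.
have -> : #|F v| = #|[pred k : 'I_n.+2 | ((1 <= k) && (k <= d + 1)) && (x v == (k <= s))]|.
  by rewrite -(cardpair (x v)); apply: eq_card => p.
case hxv: (x v).
  rewrite (@eq_card _ _ [pred k : 'I_n.+2 | (1 <= k) && (k < s.+1)]); last first.
    move=> k; rewrite !inE /=.
    case h1: (1 <= k); case h2: (k <= d + 1); case h3: (k <= s); case h4: (k < s.+1) => //=; lia.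
  rewrite cnt; last by apply/andP; split; lia.
  rewrite subn1 /=.
  by apply: eq_card => u; rewrite !inE eqb_id.
rewrite (@eq_card _ _ [pred k : 'I_n.+2 | (s.+1 <= k) && (k < d.+2)]); last first.
  move=> k; rewrite !inE /=.
  case h1: (1 <= k); case h2: (k <= d + 1); case h3: (k <= s); case h4: (s.+1 <= k);
    case h5: (k < d.+2) => //=; lia.
rewrite cnt; last by apply/andP; split; lia.
have := cardsID [set u | x u] (cnbhd e v).
have -> : cnbhd e v :&: [set u | x u] = [set u in cnbhd e v | x u].
  by apply/setP => u; rewrite !inE.
have -> : cnbhd e v :\: [set u | x u] = [set u in cnbhd e v | x u == false].
  by apply/setP => u; rewrite !inE eqbF_neg andbC.
rewrite -/(sg e x v) -/s hd /d => h; rewrite -[X in _ = X](addKn s) h; lia.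
Qed.

Lemma WL m (x : {ffun 'I_m.+1 -> bool}) :
  \prod_(v < m.+1) nb None (L x) v = W None (L x).
Proof. by rewrite /W size_mkseq. Qed.

Theorem proposition4p3 (n : nat) : 1 <= n ->
  #|Fix_up (@path_rel n)| = 2 * fib (3 * n - 1).
Proof.
case: n => [//|m] _.
rewrite card_Fix; last by move=> v; rewrite /path_rel orbb (gtn_eqF (ltnSn _)).
under eq_bigr => x _ do under eq_bigr => v _ do rewrite wt_path.
under eq_bigr => x _ do rewrite WL.
by rewrite (@sum_ffun m (W None)) total.
Qed.
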